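(* Let $\mathcal S$ and $\mathcal A$ be finite sets, $P(\cdot\mid s,a)$ a transition kernel on $\mathcal S$, $r:\mathcal S\times\mathcal A\times\mathcal S\to\mathbb R$ a reward function, $\gamma\in[0,1)$, and $\beta>0$. Let $Q^*$ be the unique fixed point of the Bellman operator $(TQ)(s,a)=R(s,a)+\gamma\sum_{s'}P(s'\mid s,a)\max_{a'\in\mathcal A}Q(s',a')$, where $R(s,a)=\sum_{s'}P(s'\mid s,a)r(s,a,s')$. For $Q_1,Q_2:\mathcal S\times\mathcal A\to\mathbb R$ define $$L_1=\mathbb E_{(s,a)\sim U(\mathcal S\times\mathcal A),\,s'\sim P(\cdot\mid s,a)}\Big[\big(r(s,a,s')+\gamma\max_{a'}Q_2(s',a')-Q_1(s,a)\big)^2+\tfrac{\beta}{2}\big(Q_2(s,a)-Q_1(s,a)\big)^2\Big],$$ $$L_2=\mathbb E_{(s,a)\sim U(\mathcal S\times\mathcal A),\,s'\sim P(\cdot\mid s,a)}\Big[\big(r(s,a,s')+\gamma\max_{a'}Q_1(s',a')-Q_2(s,a)\big)^2+\tfrac{\beta}{2}\big(Q_1(s,a)-Q_2(s,a)\big)^2\Big],$$ where $U(\mathcal S\times\mathcal A)$ is the uniform distribution. If $\varepsilon>0$ and $L_1\le\varepsilon$, $L_2\le\varepsilon$, then for $i\in\{1,2\}$ $$\|Q_i-Q^*\|_\infty\le\frac{\sqrt{\varepsilon|\mathcal S||\mathcal A|}}{1-\gamma}+\frac{\gamma}{1-\gamma}\sqrt{\frac{2\varepsilon|\mathcal S||\mathcal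 A|}{\beta}}.$$
   Context: $Q_1,Q_2$ play the roles of the online and target Q-functions of the ''symmetric gradient target tracking'' method (SGT2-DQN); they are arbitrary real-valued functions on $\mathcal S\times\mathcal A$. $\|\cdot\|_\infty$ is the maximum over $\mathcal S\times\mathcal A$. *)

(* Defs.v *)
From mathcomp Require Import all_boot all_order all_algebra.
From mathcomp Require Import all_classical all_reals.
Set Implicit Arguments. Unset Strict Implicit. Unset Printing Implicit Defensive.
Import Order.TTheory GRing.Theory Num.Theory.
Local Open Scope ring_scope.

Section Defs.
Variables (R : realType) (S A : finType).

(* max_{a in A} f a, for A nonempty (a0 is a witness; the value does not depend on it) *)
Definition amax (a0 : A) (f : A -> R) : R := \big[Num.max/f a0]_(a : A) f a.

Definition supnorm (Q : S -> A -> R) : R :=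
  \big[Num.max/0]_(p : S * A) `|Q p.1 p.2|.

Definition is_kernel (P : S -> A -> S -> R) : Prop :=
  (forall s a s', 0 <= P s a s') /\ (forall s a, \sum_(s' : S) P s a s' = 1).

Definition Rexp (P : S -> A -> S -> R) (r : S -> A -> S -> R) (s : S) (a : A) : R :=
  \sum_(s' : S) P s a s' * r s a s'.

Definition bellman (a0 : A) (P : S -> A -> S -> R) (r : S -> A -> S -> R)
  (gamma : R) (Q : S -> A -> R) : S -> A -> R :=
  fun s a => Rexp P r s a + gamma * \sum_(s' : S) P s a s' * amax a0 (Q s').

Definition sgt2_loss (a0 : A) (P : S -> A -> S -> R) (r : S -> A -> S -> R)
  (gamma beta : R) (Qo Qt : S -> A -> R) : R :=
  (#|{: S * A}|%:R)^-1 *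
  \sum_(p : S * A) \sum_(s' : S) P p.1 p.2 s' *
     ((r p.1 p.2 s' + gamma * amax a0 (Qt s') - Qo p.1 p.2) ^+ 2
      + beta / 2 * (Qt p.1 p.2 - Qo p.1 p.2) ^+ 2).
End Defs.

(* Main.v *)
Require Import Defs.
From mathcomp Require Import all_boot all_order all_algebra.
From mathcomp Require Import all_classical all_reals.
From mathcomp Require Import lra ring.
Import Order.TTheory GRing.Theory Num.Theory.
Local Open Scope ring_scope.

Section Aux.
Variables (R : realType) (S A : finType) (a0 : A).

Lemma amax_ge (f : A -> R) a : f a <= amax a0 f.
Proof. by rewrite /amax (bigD1 a) //= le_max lexx. Qed.

Lemma amax_le (f : A -> R) c : (forall a, f a <= c) -> amax a0 f <= c.
Proof.
move=> h; rewrite /amax; apply: (big_ind (fun x => x <= c)) => //.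
by move=> x y hx hy; rewrite ge_max hx hy.
Qed.

Lemma amax_lip (f g : A -> R) d : (forall a, `|f a - g a| <= d) ->
  `|amax a0 f - amax a0 g| <= d.
Proof.
move=> h; rewrite ler_norml; apply/andP; split.
- have : amax a0 g <= amax a0 f + d.
    apply: amax_le => a; have := h a; rewrite ler_norml => /andP[h1 h2].
    have := amax_ge f a; lra.
  lra.
- have : amax a0 f <= amax a0 g + d.
    apply: amax_le => a; have := h a; rewrite ler_norml => /andP[h1 h2].
    have := amax_ge g a; lra.
  lra.
Qed.

Lemma supnorm_ge (Q : S -> A -> R) s a : `|Q s a| <= supnorm Q.
Proof. by rewrite /supnorm (bigD1 (s, a)) //= le_max lexx. Qed.

Lemma supnorm_le (Q : S -> A -> R) c : 0 <= c -> (forall s a, `|Q s a| <= c) ->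
  supnorm Q <= c.
Proof.
move=> c0 h; rewrite /supnorm; apply: (big_ind (fun x => x <= c)) => //.
- by move=> x y hx hy; rewrite ge_max hx hy.
Qed.

Lemma bellman_lip (P : S -> A -> S -> R) r gamma (Q Q' : S -> A -> R) c :
  is_kernel P -> 0 <= gamma -> (forall s a, `|Q s a - Q' s a| <= c) ->
  forall s a, `|bellman a0 P r gamma Q s a - bellman a0 P r gamma Q' s a| <= gamma * c.
Proof.
move=> [hp hs] hg h s a; rewrite /bellman.
have e : \sum_(s' : S) P s a s' * amax a0 (Q s') - \sum_(s' : S) P s a s' * amax a0 (Q' s')
  = \sum_(s' : S) P s a s' * (amax a0 (Q s') - amax a0 (Q' s')).
  by rewrite -sumrB; apply: eq_bigr => i _; rewrite mulrBr.
set X := \sum_(s' : S) P s a s' * amax a0 (Q s').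
set Y := \sum_(s' : S) P s a s' * amax a0 (Q' s').
have -> : Rexp P r s a + gamma * X - (Rexp P r s a + gamma * Y) = gamma * (X - Y) by ring.
rewrite e normrM (ger0_norm hg); apply: ler_wpM2l => //.
apply: le_trans (ler_norm_sum _ _ _) _.
apply: le_trans (_ : \sum_(s' : S) P s a s' * c <= c).
  apply: ler_sum => i _; rewrite normrM (ger0_norm (hp _ _ _)).
  by apply: ler_wpM2l => //; apply: amax_lip => b; exact: h.
by rewrite -mulr_suml hs mul1r.
Qed.

Lemma jensen (p x : S -> R) : (forall i, 0 <= p i) -> \sum_i p i = 1 ->
  (\sum_i p i * x i) ^+ 2 <= \sum_i p i * x i ^+ 2.
Proof.
move=> hp hs; set m := \sum_i p i * x i.
have h0 : 0 <= \sum_i p i * (x i - m) ^+ 2.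
  by apply: sumr_ge0 => i _; apply: mulr_ge0 => //; exact: sqr_ge0.
have e : \sum_i p i * (x i - m) ^+ 2 =
   \sum_i p i * x i ^+ 2 - (2 * m) * m + m ^+ 2 * 1.
  rewrite (eq_bigr (fun i => p i * x i ^+ 2 + - ((2 * m) * (p i * x i)) + m ^+ 2 * p i));
    last by move=> i _; ring.
  by rewrite big_split /= big_split /= sumrN -!mulr_sumr hs.
move: h0; rewrite e; lra.
Qed.

Lemma loss_pt (P : S -> A -> S -> R) r gamma beta eps (Qo Qt : S -> A -> R) :
  is_kernel P -> 0 < beta -> sgt2_loss a0 P r gamma beta Qo Qt <= eps ->
  forall s a,
  `|bellman a0 P r gamma Qt s a - Qo s a| <= Num.sqrt (eps * #|S|%:R * #|A|%:R) /\
  `|Qt s a - Qo s a| <= Num.sqrt (2 * eps * #|S|%:R * #|A|%:R / beta).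
Proof.
move=> [hp hs] hb hL s a.
set N := (#|{: S * A}|%:R : R).
have hN : N = #|S|%:R * #|A|%:R by rewrite /N card_prod natrM.
have Npos : 0 < N.
  rewrite /N ltr0n; apply/card_gt0P; by exists (s, a).
set T := fun p : S * A => \sum_(s' : S) P p.1 p.2 s' *
     ((r p.1 p.2 s' + gamma * amax a0 (Qt s') - Qo p.1 p.2) ^+ 2
      + beta / 2 * (Qt p.1 p.2 - Qo p.1 p.2) ^+ 2).
have Tge0 : forall p, 0 <= T p.
  move=> p; apply: sumr_ge0 => i _; apply: mulr_ge0 => //.
  apply: addr_ge0; first exact: sqr_ge0.
  apply: mulr_ge0; last exact: sqr_ge0; lra.
have hsum : \sum_p T p <= N * eps.
  have -> : \sum_p T p = N * sgt2_loss a0 P r gamma beta Qo Qt.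
    by rewrite /sgt2_loss mulrA divff ?mul1r // gt_eqF.
  by apply: ler_wpM2l => //; exact: ltW.
have hT : T (s, a) <= N * eps.
  apply: le_trans hsum; rewrite (bigD1 (s, a)) //= lerDl.
  by apply: sumr_ge0 => p _; exact: Tge0.
set x := fun s' => r s a s' + gamma * amax a0 (Qt s') - Qo s a.
set k := beta / 2 * (Qt s a - Qo s a) ^+ 2.
have eT : T (s, a) = \sum_(s' : S) P s a s' * x s' ^+ 2 + k.
  rewrite /T /= (eq_bigr (fun s' => P s a s' * x s' ^+ 2 + k * P s a s'));
    last by move=> i _; rewrite /x /k; ring.
  by rewrite big_split /= -mulr_sumr hs mulr1.
have em : \sum_(s' : S) P s a s' * x s' = bellman a0 P r gamma Qt s a - Qo s a.
  rewrite /x /bellman /Rexp.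
  rewrite (eq_bigr (fun s' => P s a s' * r s a s' + gamma * (P s a s' * amax a0 (Qt s'))
      - Qo s a * P s a s')); last by move=> i _; ring.
  by rewrite sumrB big_split /= -!mulr_sumr hs mulr1.
have hJ : (\sum_i P s a i * x i) ^+ 2 <= \sum_i P s a i * x i ^+ 2 by apply: jensen; [exact: hp | exact: hs].
rewrite em in hJ.
have x0 : 0 <= \sum_(s' : S) P s a s' * x s' ^+ 2.
  by apply: sumr_ge0 => i _; apply: mulr_ge0 => //; exact: sqr_ge0.
have k0 : 0 <= k by apply: mulr_ge0; [lra | exact: sqr_ge0].
have NE : 0 <= N * eps.
  by apply: le_trans hT; exact: Tge0.
split.
- rewrite -sqrtr_sqr ler_sqrt; last by rewrite -mulrA -hN mulrC.
  rewrite -mulrA -hN mulrC; rewrite eT in hT; lra.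
- rewrite -sqrtr_sqr ler_sqrt; last first.
    apply: divr_ge0; last exact: ltW.
    rewrite -!mulrA -hN; apply: mulr_ge0 => //; rewrite mulrC //.
  rewrite ler_pdivlMr // -!mulrA -hN.
  rewrite eT in hT; move: hT; rewrite /k; lra.
Qed.

Lemma main_bound (P : S -> A -> S -> R) r gamma (Qstar Qa Qb : S -> A -> R) e d :
  is_kernel P -> 0 <= gamma -> gamma < 1 ->
  (forall s a, Qstar s a = bellman a0 P r gamma Qstar s a) ->
  0 <= e -> 0 <= d ->
  (forall s a, `|bellman a0 P r gamma Qb s a - Qa s a| <= e) ->
  (forall s a, `|Qb s a - Qa s a| <= d) ->
  supnorm (fun s a => Qa s a - Qstar s a) <= e / (1 - gamma) + gamma / (1 - gamma) * d.
Proof.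
move=> hk hg hg1 hfix e0 d0 h1 h2.
set D := supnorm (fun s a => Qa s a - Qstar s a).
have hD : forall s a, `|Qa s a - Qstar s a| <= D
  by move=> s a; exact: (supnorm_ge (fun s a => Qa s a - Qstar s a)).
have D0 : 0 <= D.
  rewrite /D /supnorm; apply: (big_ind (fun x => 0 <= x)) => //.
  - by move=> x y hx hy; rewrite le_max hx.
have hl1 : forall s a, `|bellman a0 P r gamma Qb s a - bellman a0 P r gamma Qa s a| <= gamma * d by apply: bellman_lip.
have hl2 : forall s a, `|bellman a0 P r gamma Qa s a - bellman a0 P r gamma Qstar s a| <= gamma * D by apply: bellman_lip.
have hDD : D <= e + gamma * d + gamma * D.
  apply: supnorm_le.
    have : 0 <= gamma * d by exact: mulr_ge0.
    have : 0 <= gamma * D by exact: mulr_ge0.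
    lra.
  move=> s a; rewrite (hfix s a).
  have := h1 s a; have := hl1 s a; have := hl2 s a.
  rewrite !ler_norml => /andP[u1 u2] /andP[v1 v2] /andP[w1 w2].
  apply/andP; split; lra.
have -> : e / (1 - gamma) + gamma / (1 - gamma) * d = (e + gamma * d) / (1 - gamma)
  by ring.
rewrite ler_pdivlMr; last lra.
have : gamma * D = D * gamma by rewrite mulrC.
nra.
Qed.

End Aux.

Theorem theorem2 (R : realType) (S A : finType) (a0 : A)
  (P : S -> A -> S -> R) (r : S -> A -> S -> R) (gamma beta eps : R)
  (Qstar Q1 Q2 : S -> A -> R) :
  is_kernel P ->
  0 <= gamma -> gamma < 1 -> 0 < beta ->
  (forall s a, Qstar s a = bellman a0 P r gamma Qstar s a) ->
  0 < eps ->
  sgt2_loss a0 P r gamma beta Q1 Q2 <= eps ->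
  sgt2_loss a0 P r gamma beta Q2 Q1 <= eps ->
  let bound := Num.sqrt (eps * #|S|%:R * #|A|%:R) / (1 - gamma)
    + gamma / (1 - gamma) * Num.sqrt (2 * eps * #|S|%:R * #|A|%:R / beta) in
  supnorm (fun s a => Q1 s a - Qstar s a) <= bound /\
  supnorm (fun s a => Q2 s a - Qstar s a) <= bound.
Proof.
move=> hk hg hg1 hb hfix he hL1 hL2 bound.
have p1 := @loss_pt R S A a0 P r gamma beta eps Q1 Q2 hk hb hL1.
have p2 := @loss_pt R S A a0 P r gamma beta eps Q2 Q1 hk hb hL2.
split.
- apply: (@main_bound R S A a0 P r gamma Qstar Q1 Q2 _ _ hk hg hg1 hfix (sqrtr_ge0 _) (sqrtr_ge0 _)).
  + by move=> s a; case: (p1 s a) => h _.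
  + by move=> s a; case: (p1 s a) => _ h.
- apply: (@main_bound R S A a0 P r gamma Qstar Q2 Q1 _ _ hk hg hg1 hfix (sqrtr_ge0 _) (sqrtr_ge0 _)).
  + by move=> s a; case: (p2 s a) => h _.
  + by move=> s a; case: (p2 s a) => _ h.
Qed.
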